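(* Let $\Gamma\in\mathcal{H}$ and let $f\in P^\Gamma$. Then $\Gamma$ is the homothety type of a generalized rotation set of $f$.
   Context: $\mathbb{T}^2=\mathbb{R}^2/\mathbb{Z}^2$, $R_\theta(x)=x+\theta$; $\overline{\mathcal{O}}^{\infty}(\mathbb{T}^2)$ is the $C^\infty$-closure of $\{h\circ R_\theta\circ h^{-1}: h\in\mathrm{Diff}^\infty(\mathbb{T}^2),\theta\in\mathbb{T}^2\}$. $\mathcal{H}$ is the set of non-empty compact subsets of $\mathbb{R}^2$ modulo translations and positive-ratio homotheties. $d_H$ is the Hausdorff distance. For $r>0$, $K\in\mathcal{LA}_r(\Gamma)$ means $\mathrm{diam}(K)>r$ and some $\hat\Gamma\in\Gamma$ of diameter $1$ satisfies $d_H(K/\mathrm{diam}(K),\hat\Gamma)<1/r$. Let $D=[0,1]^2$ and fix $\tilde x_0\in D$. For $k\in\mathbb{N}^*$, $P_k^\Gamma=\{f\in\overline{\mathcal{O}}^{\infty}(\mathbb{T}^2): \exists n\in\mathbb{N}^*,\ \tilde f^n(D)\in\mathcal{LA}_k(\Gamma)\}$, where $\tilde f$ is a lift of $f$ (the condition does not depend on the lift), and $P^\Gamma=\bigcap_{k\ge1}P_k^\Gamma$. For a lift $\tilde f$ of $f$, a generalized rotation set of $f$ is a Hausdorff limit $\lim_{i}\frac{\tilde f^{n_i}(D)-\tilde f^{n_i}(\tilde x_0)}{\mathrm{diam}(\tilde f^{n_i}(D))}$ along some sequence of natural numbers $(n_i)$ with $\mathrm{diam}(\tilde f^{n_i}(D))\to+\infty$.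 *)

(* Defs.v *)
From HB Require Import structures.
From mathcomp Require Import all_boot all_order all_algebra.
From mathcomp Require Import all_classical all_reals all_analysis.

Set Implicit Arguments.
Unset Strict Implicit.
Unset Printing Implicit Defensive.

Import Order.TTheory GRing.Theory Num.Theory.
Import numFieldNormedType.Exports.
Local Open Scope classical_set_scope.
Local Open Scope ring_scope.

Section Torus.
Variable R : realType.

(* points of the plane R^2 (covering space of T^2 = R^2/Z^2) *)
Definition pt := 'rV[R]_2.

Definition edist (x y : pt) : R :=
  Num.sqrt (\sum_(i < 2) (x 0 i - y 0 i) ^+ 2).

Definition diam (K : set pt) : R := sup [set edist x y | x in K & y in K].

Definition dist_to (a : pt) (B : set pt) : R := inf [set edist a b | b in B].
Definition dH (A B : set pt) : R :=
  Num.max (sup [set dist_to a B | a in A]) (sup [set dist_to b A | b in B]).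

Definition ncompact (K : set pt) : Prop := K !=set0 /\ compact K.

(* K2 is the image of K1 by a translation composed with a positive-ratio
   homothety: K1 and K2 have the same class in \mathcal{H} *)
Definition homothetic (K1 K2 : set pt) : Prop :=
  exists (a : pt) (lam : R), 0 < lam /\ K2 = [set a + lam *: x | x in K1].

Definition scale_set (c : R) (K : set pt) : set pt := [set c *: x | x in K].
Definition translate_set (a : pt) (K : set pt) : set pt := [set x + a | x in K].

(* K \in LA_r(Gamma), where Gamma is the class of the compact set G *)
Definition LA (r : R) (G K : set pt) : Prop :=
  diam K > r /\
  exists Gh : set pt, homothetic G Gh /\ diam Gh = 1 /\
     dH (scale_set (diam K)^-1 K) Gh < r^-1.

Definition D : set pt := [set x | forall i : 'I_2, 0 <= x 0 i <= 1].

Definition isZ2 (p : pt) : Prop := forall i : 'I_2, exists z : int, p 0 i = z%:~R.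

(* F : R^2 -> R^2 descends to a map of T^2 *)
Definition descends (F : pt -> pt) : Prop :=
  forall x p, isZ2 p -> isZ2 (F (x + p) - F x).

Fixpoint iderive (vs : seq pt) (F : pt -> pt) : pt -> pt :=
  match vs with
  | [::] => F
  | v :: vs' => fun x => 'D_v (iderive vs' F) x
  end.

Definition smooth (F : pt -> pt) : Prop :=
  forall vs : seq pt, continuous (iderive vs F) /\
    forall (v x : pt), derivable (iderive vs F) x v.

(* H is a lift of an element h of Diff^infty(T^2) *)
Definition diff_lift (H : pt -> pt) : Prop :=
  exists Hinv : pt -> pt,
    cancel H Hinv /\ cancel Hinv H /\ smooth H /\ smooth Hinv /\
    descends H /\ descends Hinv.

(* G is a lift of h o R_theta o h^-1 for some h in Diff^infty(T^2), theta *)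
Definition conj_rot_lift (G : pt -> pt) : Prop :=
  exists (H Hinv : pt -> pt) (theta : pt),
    diff_lift H /\ cancel H Hinv /\ cancel Hinv H /\
    G = (fun x => H (Hinv x + theta)).

(* F is a lift of an element of the C^infty closure of the conjugates of
   rotations: F lifts a diffeomorphism of T^2 and there are lifts G_n of
   conjugates of rotations converging to F in the C^infty topology
   (uniform convergence of all iterated derivatives). *)
Definition closure_O_lift (F : pt -> pt) : Prop :=
  diff_lift F /\
  exists Gs : nat -> pt -> pt,
    (forall n, conj_rot_lift (Gs n)) /\
    forall (vs : seq pt) (e : R), 0 < e ->
      exists N : nat, forall n, (N <= n)%N -> forall x,
        edist (iderive vs (Gs n) x) (iderive vs F x) < e.

Definition iterD (F : pt -> pt) (n : nat) : set pt := (iter n F) @` D.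

(* f \in P^Gamma (through a lift F of f) *)
Definition in_P (G : set pt) (F : pt -> pt) : Prop :=
  closure_O_lift F /\
  forall k : nat, (0 < k)%N -> exists n : nat, (0 < n)%N /\ LA k%:R G (iterD F n).

(* L is a generalized rotation set of f (with lift F, base point x0) *)
Definition gen_rot_set (F : pt -> pt) (x0 : pt) (L : set pt) : Prop :=
  ncompact L /\
  exists ns : nat -> nat,
    (forall M : R, exists N : nat, forall i, (N <= i)%N -> M < diam (iterD F (ns i))) /\
    (forall e : R, 0 < e -> exists N : nat, forall i, (N <= i)%N ->
       dH (scale_set (diam (iterD F (ns i)))^-1
             (translate_set (- iter (ns i) F x0) (iterD F (ns i)))) L < e).

End Torus.

(* Main.v *)
Require Import Defs.
From HB Require Import structures.
From mathcomp Require Import all_boot all_order all_algebra.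
From mathcomp Require Import all_classical all_reals all_analysis.
From mathcomp Require Import ring lra.
Set Implicit Arguments.
Unset Strict Implicit.
Unset Printing Implicit Defensive.
Import Order.TTheory GRing.Theory Num.Theory.
Import numFieldNormedType.Exports.
Local Open Scope classical_set_scope.
Local Open Scope ring_scope.

Section S.
Variable R : realType.
Implicit Types x y z : 'rV[R]_2.
Notation ed := (@Defs.edist R).

Definition c0 : 'I_2 := ord0.
Definition c1 : 'I_2 := ord_max.

Lemma edistE x y : ed x y =
  Num.sqrt ((x 0 c0 - y 0 c0) ^+ 2 + (x 0 c1 - y 0 c1) ^+ 2).
Proof.
rewrite /Defs.edist big_ord_recr /= big_ord_recr big_ord0 /= add0r.
have -> : widen_ord (leqnSn 1) ord_max = c0 by apply/val_inj.
by [].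
Qed.

Lemma edist_ge0 x y : 0 <= ed x y.
Proof. by rewrite edistE sqrtr_ge0. Qed.

Lemma edist_sym x y : ed x y = ed y x.
Proof.
rewrite !edistE; congr (Num.sqrt _).
by rewrite -[x 0 c0 - _]opprB sqrrN -[x 0 c1 - _]opprB sqrrN.
Qed.

Lemma sqrt_tri (a b c d : R) :
  Num.sqrt ((a + c) ^+ 2 + (b + d) ^+ 2) <=
  Num.sqrt (a ^+ 2 + b ^+ 2) + Num.sqrt (c ^+ 2 + d ^+ 2).
Proof.
set s := Num.sqrt (a ^+ 2 + _); set t := Num.sqrt (c ^+ 2 + _).
have s0 : 0 <= s by apply: sqrtr_ge0.
have t0 : 0 <= t by apply: sqrtr_ge0.
have hs : s ^+ 2 = a ^+ 2 + b ^+ 2.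
  by rewrite sqr_sqrtr //; apply: addr_ge0; apply: sqr_ge0.
have ht : t ^+ 2 = c ^+ 2 + d ^+ 2.
  by rewrite sqr_sqrtr //; apply: addr_ge0; apply: sqr_ge0.
have h1 : (a * c + b * d) ^+ 2 <= (s * t) ^+ 2.
  rewrite exprMn hs ht; have := sqr_ge0 (a * d - b * c); nra.
have h2 : a * c + b * d <= s * t.
  have st0 : 0 <= s * t by rewrite mulr_ge0.
  nra.
have h3 : (a + c) ^+ 2 + (b + d) ^+ 2 <= (s + t) ^+ 2.
  have -> : (s + t) ^+ 2 = s ^+ 2 + t ^+ 2 + 2 * (s * t) by ring.
  rewrite hs ht; nra.
apply: (le_trans (ler_wsqrtr h3)).
by rewrite sqrtr_sqr ger0_norm // addr_ge0.
Qed.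

Lemma edist_tri x y z : ed x z <= ed x y + ed y z.
Proof.
rewrite !edistE.
have -> : x 0 c0 - z 0 c0 = (x 0 c0 - y 0 c0) + (y 0 c0 - z 0 c0) by ring.
have -> : x 0 c1 - z 0 c1 = (x 0 c1 - y 0 c1) + (y 0 c1 - z 0 c1) by ring.
exact: sqrt_tri.
Qed.

Lemma edist_scale (c : R) x y : 0 <= c -> ed (c *: x) (c *: y) = c * ed x y.
Proof.
move=> c0'; rewrite !edistE !mxE.
have -> : (c * x 0 c0 - c * y 0 c0) ^+ 2 + (c * x 0 c1 - c * y 0 c1) ^+ 2
  = c ^+ 2 * ((x 0 c0 - y 0 c0) ^+ 2 + (x 0 c1 - y 0 c1) ^+ 2) by ring.
by rewrite sqrtrM ?sqr_ge0 // sqrtr_sqr ger0_norm.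
Qed.

Definition en x := ed x 0.

Lemma edist_en x y : ed x y = en (x - y).
Proof. by rewrite /en !edistE !mxE !subr0. Qed.

Lemma en_tri x y : en (x + y) <= en x + en y.
Proof.
rewrite /en; apply: (le_trans (edist_tri _ y _)).
by rewrite (edist_en (x + y)) addrK.
Qed.

Lemma en_sym x y : en (x - y) = en (y - x).
Proof. by rewrite -!edist_en edist_sym. Qed.


Lemma edist_hom (a x y : 'rV[R]_2) (lam : R) : 0 <= lam ->
  ed (a + lam *: x) (a + lam *: y) = lam * ed x y.
Proof.
move=> l0; rewrite -edist_scale // edist_en [RHS]edist_en; congr en.
by apply/rowP => j; rewrite !mxE; ring.
Qed.

Definition close (A B : set 'rV[R]_2) (e : R) :=
  (forall a, A a -> exists2 b, B b & ed a b < e) /\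
  (forall b, B b -> exists2 a, A a & ed a b < e).

Definition bnd (A : set 'rV[R]_2) := exists M, forall x y, A x -> A y -> ed x y <= M.

Lemma dist_to_le a (B : set 'rV[R]_2) b : B b -> dist_to a B <= ed a b.
Proof.
move=> Bb; rewrite /dist_to; apply: ge_inf; last by exists b.
by exists 0 => _ [b' _ <-]; apply: edist_ge0.
Qed.

Lemma close_dH (A B : set 'rV[R]_2) e : A !=set0 -> B !=set0 -> close A B e ->
  dH A B <= e.
Proof.
move=> [a0 Aa0] [b0 Bb0] [h1 h2]; rewrite /dH ge_max; apply/andP; split.
  apply: ge_sup; first by exists (dist_to a0 B), a0.
  move=> _ [a Aa <-]; have [b Bb ab] := h1 a Aa.
  exact: (le_trans (dist_to_le a Bb) (ltW ab)).
apply: ge_sup; first by exists (dist_to b0 A), b0.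
move=> _ [b Bb <-]; have [a Aa ab] := h2 b Bb.
by apply: (le_trans (dist_to_le b Aa)); rewrite edist_sym ltW.
Qed.

Lemma dist_to_ub (A B : set 'rV[R]_2) : bnd A -> B !=set0 ->
  has_ubound [set dist_to a B | a in A].
Proof.
move=> [M hM] [b0 Bb0].
have [[a0 Aa0]|A0] := pselect (A !=set0); last first.
  exists 0 => z [a Aa _]; by case: A0; exists a.
exists (M + ed a0 b0) => _ [a Aa <-].
apply: (le_trans (dist_to_le a Bb0)); apply: (le_trans (edist_tri a a0 b0)).
by rewrite lerD2r hM.
Qed.

Lemma dH_close (A B : set 'rV[R]_2) e : A !=set0 -> B !=set0 -> bnd A -> bnd B ->
  dH A B < e -> close A B e.
Proof.
move=> A0 B0 bA bB hd; split.
  move=> a Aa.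
  have h : dist_to a B < e.
    apply: le_lt_trans hd; rewrite /dH le_max; apply/orP; left.
    by apply: ub_le_sup; [apply: dist_to_ub | exists a].
  have [b0 Bb0] := B0.
  have [_ [b Bb <-] hb] := inf_lt (ex_intro _ (ed a b0) (ex_intro2 _ _ b0 Bb0 erefl)) h.
  by exists b.
move=> b Bb.
have h : dist_to b A < e.
  apply: le_lt_trans hd; rewrite /dH le_max; apply/orP; right.
  by apply: ub_le_sup; [apply: dist_to_ub | exists b].
have [a0 Aa0] := A0.
have [_ [a Aa <-] ha] := inf_lt (ex_intro _ (ed b a0) (ex_intro2 _ _ a0 Aa0 erefl)) h.
by exists a => //; rewrite edist_sym.
Qed.

Lemma diam_pos_bnd (A : set 'rV[R]_2) : 0 < diam A -> bnd A.
Proof.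
rewrite /diam => hd.
have [h|h] := pselect (has_sup [set ed x y | x in A & y in A]).
  exists (sup [set ed x y | x in A & y in A]) => x y Ax Ay.
  by apply: ub_le_sup; [case: h | exists x => //; exists y].
by move: hd; rewrite sup_out // ltxx.
Qed.

Lemma diam_hom (G : set 'rV[R]_2) a lam : 0 < lam ->
  diam [set a + lam *: x | x in G] = 1 -> lam * diam G = 1.
Proof.
move=> l0 hd; rewrite -hd /diam.
set S := [set ed x y | x in G & y in G].
set S' := [set ed x y | x in _ & y in _].
have [hS'|hS'] := pselect (has_sup S'); last first.
  by move: hd; rewrite /diam sup_out // => /eqP; rewrite eq_sym oner_eq0.
have [[_ [_ [x Gx <-] [_ [y Gy <-] _]]] [M hM]] := hS'.
have S0 : S !=set0 by exists (ed x y), x => //; exists y.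
have hS : has_ubound S.
  exists (M / lam) => _ [u Gu [v Gv <-]].
  rewrite ler_pdivlMr // mulrC; apply: hM.
  exists (a + lam *: u); first by exists u.
  exists (a + lam *: v); first by exists v.
  by rewrite edist_hom // ltW.
apply/le_anti/andP; split.
  rewrite -ler_pdivlMl //; apply: ge_sup => // _ [u Gu [v Gv <-]].
  rewrite ler_pdivlMl //; apply: ub_le_sup; first by exists M.
  exists (a + lam *: u); first by exists u.
  exists (a + lam *: v); first by exists v.
  by rewrite edist_hom // ltW.
apply: ge_sup; first by case: hS'.
move=> _ [_ [u Gu <-] [_ [v Gv <-] <-]].
rewrite edist_hom; last exact: ltW.
rewrite ler_pM2l //.
by apply: ub_le_sup => //; exists u => //; exists v.
Qed.


Lemma key (c : R) x q a (lam : R) g g0 gs r1 r2 :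
  0 <= lam ->
  ed (c *: x) (a + lam *: g) < r1 -> ed (c *: q) (a + lam *: g0) < r2 ->
  ed (c *: (x + - q)) (- (lam *: gs) + lam *: g) < r1 + r2 + lam * ed g0 gs.
Proof.
move=> l0 h1 h2; rewrite edist_en.
have -> : c *: (x + - q) - (- (lam *: gs) + lam *: g) =
  (c *: x - (a + lam *: g)) + ((a + lam *: g0 - c *: q) + (lam *: gs - lam *: g0)).
  by apply/rowP => j; rewrite !mxE; ring.
apply: (le_lt_trans (en_tri _ _)); rewrite -[r1 + r2 + _]addrA.
have h3 : en (a + lam *: g0 - c *: q + (lam *: gs - lam *: g0)) <=
   ed (c *: q) (a + lam *: g0) + lam * ed g0 gs.
  apply: (le_trans (en_tri _ _)).
  by rewrite -!edist_en edist_sym (edist_sym g0) edist_scale.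
rewrite -edist_en.
apply: ltr_leD h1 _.
by apply: (le_trans h3); rewrite lerD2r ltW.
Qed.

Lemma cluster_seq (G : set 'rV[R]_2) (g : nat -> 'rV[R]_2) : compact G ->
  (forall k, G (g k)) -> exists2 gs, G gs &
  forall (e : R) N, 0 < e -> exists2 k, (N <= k)%N & ed (g k) gs < e.
Proof.
move=> Gc hg.
have [gs [Ggs cl]] : G `&` cluster (g @ \oo) !=set0.
  apply: (Gc (g @ \oo)); by exists 0%N => // n _; exact: hg.
exists gs => // e N e0.
have e2 : 0 < e / 2 by rewrite divr_gt0.
have nb : nbhs gs [set y : 'rV[R]_2 | `|gs 0 c0 - y 0 c0| < e / 2 /\
                                    `|gs 0 c1 - y 0 c1| < e / 2].
  apply: filterI.
    have h : nbhs gs [set y : 'rV[R]_2 | ball (gs 0 c0) (e / 2) (y 0 c0)] :=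
      @coord_continuous R 1 2 0 c0 gs (ball (gs 0 c0) (e / 2)) (nbhsx_ballx _ _ e2).
    apply: filterS h => y /=; by rewrite -ball_normE.
  have h : nbhs gs [set y : 'rV[R]_2 | ball (gs 0 c1) (e / 2) (y 0 c1)] :=
      @coord_continuous R 1 2 0 c1 gs (ball (gs 0 c1) (e / 2)) (nbhsx_ballx _ _ e2).
    apply: filterS h => y /=; by rewrite -ball_normE.
have FA : (g @ \oo) [set g k | k in [set k | (N <= k)%N]].
  by exists N => // n /= hn; exists n.
have [_ [[k hk <-] [h1 h2]]] := cl _ _ FA nb.
exists k => //.
rewrite edistE.
move: h1 h2 => /ltr_normlP [h1 h1'] /ltr_normlP [h2 h2'].
rewrite -[e]gtr0_norm // -sqrtr_sqr ltr_sqrt ?exprn_gt0 //.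
nra.
Qed.


Lemma affine_compact (G : set 'rV[R]_2) (b : 'rV[R]_2) (lam : R) : compact G ->
  compact [set b + lam *: x | x in G].
Proof.
move=> Gc.
have hc : continuous (fun x : 'rV[R]_2 => b + lam *: x).
  move=> x.

exact: (cvgD (cvg_cst b) (cvgZ (cvg_cst lam) cvg_id)).
exact: (continuous_compact (continuous_subspaceT hc) Gc).
Qed.

End S.

Theorem mainTheorem8 (R : realType) (x0 : pt R) (G : set (pt R)) (F : pt R -> pt R) :
  D x0 -> ncompact G -> in_P G F ->
  exists L : set (pt R), gen_rot_set F x0 L /\ homothetic G L.
Proof.
move=> Dx0 [G0 Gc] [_ HP].
have HP' : forall k, exists n, LA (k.+1)%:R G (Defs.iterD F n).
  by move=> k; have [n [_ h]] := HP k.+1 isT; exists n.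
have [nf hnf] := choice HP'.
pose K k := Defs.iterD F (nf k).
pose d k := diam (K k).
pose q k := iter (nf k) F x0.
have Kq : forall k, K k (q k) by move=> k; exists x0.
have dpos : forall k, (k.+1)%:R < d k by move=> k; case: (hnf k).
pose lam0 := (diam G)^-1.
have step : forall k, exists p : 'rV[R]_2 * 'rV[R]_2,
   0 < lam0 /\ G p.2 /\ close (scale_set (d k)^-1 (K k)) [set p.1 + lam0 *: x | x in G] (k.+1%:R)^-1
   /\ Defs.edist ((d k)^-1 *: q k) (p.1 + lam0 *: p.2) < (k.+1%:R)^-1.
  move=> k; have [_ [Gh [[a [lam [l0 eGh]]] [hGh hdH]]]] := hnf k.
  subst Gh.
  have el := diam_hom l0 hGh.
  have dG0 : diam G != 0 by apply/eqP => h; move: el; rewrite h mulr0 => /eqP; rewrite eq_sym oner_eq0.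
  have el' : lam = lam0 by rewrite /lam0 -[lam](mulfK dG0) el div1r.
  subst lam.
  have d0 : 0 < d k by apply: lt_trans (dpos k).
  have cl : close (scale_set (d k)^-1 (K k)) [set a + lam0 *: x | x in G] (k.+1%:R)^-1.
    apply: dH_close => //.
    - by exists ((d k)^-1 *: q k), (q k).
    - by have [g Gg] := G0; exists (a + lam0 *: g), g.
    - have [M hM] := diam_pos_bnd d0.
      exists ((d k)^-1 * M) => _ _ [x Kx <-] [y Ky <-].
      rewrite edist_scale; last by rewrite invr_ge0 ltW.
      by rewrite ler_pM2l ?invr_gt0 // hM.
    - by apply: diam_pos_bnd; rewrite hGh.
  have [_ [g0 Gg0 <-] hg0] := cl.1 _ (ex_intro2 _ _ (q k) (Kq k) erefl).
  by exists (a, g0).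
have [p hp] := choice step.
have l0 : 0 < lam0 by case: (hp 0%N).
have [gs Ggs hgs] := cluster_seq Gc (fun k => (hp k).2.1).
have hphi : forall i, exists k, (i <= k)%N /\
    Defs.edist (p k).2 gs < (i.+1%:R)^-1.
  move=> i; have e' : 0 < (i.+1%:R : R)^-1 by rewrite invr_gt0 ltr0Sn.
  by have [k hk h] := hgs _ i e'; exists k.
have [phi hphi'] := choice hphi.
pose L := [set -(lam0 *: gs) + lam0 *: x | x in G].
exists L; split; last by exists (-(lam0 *: gs)), lam0.
split.
  split; first by have [g' Gg'] := G0; exists (-(lam0 *: gs) + lam0 *: g'), g'.
  exact: affine_compact.
exists (fun i => nf (phi i)); split.
  move=> M; exists (Num.trunc M) => i hi.
  apply: (lt_trans (truncnS_gt M)); apply: le_lt_trans (dpos (phi i)).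
  by rewrite ler_nat ltnS; exact: leq_trans hi (hphi' i).1.
move=> e e0.
pose C := 2 + lam0.
exists (Num.trunc (C / e)) => i hi.
have [hki hk] := hphi' i.
have [_ [_ [[cl1 cl2] hq]]] := hp (phi i).
have ri0 : 0 < (i.+1%:R : R)^-1 by rewrite invr_gt0 ltr0Sn.
have rle : ((phi i).+1%:R : R)^-1 <= (i.+1%:R)^-1.
  by rewrite lef_pV2 ?posrE ?ltr0Sn // ler_nat ltnS.
have hb : lam0 * Defs.edist (p (phi i)).2 gs <= lam0 * (i.+1%:R)^-1.
  by rewrite ler_pM2l // ltW.
have bnd' : ((phi i).+1%:R)^-1 + ((phi i).+1%:R)^-1 + lam0 * Defs.edist (p (phi i)).2 gs
     <= C * (i.+1%:R)^-1.
  rewrite /C mulrDl; move: hb rle; set u := (i.+1%:R)^-1; set w := ((phi i).+1%:R)^-1; set E := Defs.edist _ _; lra.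
have cl : close (scale_set (d (phi i))^-1 (translate_set (- q (phi i)) (K (phi i)))) L
    (C * (i.+1%:R)^-1).
  split.
    move=> _ [_ [x Kx <-] <-].
    have [_ [g' Gg' <-] hx] := cl1 _ (ex_intro2 _ _ x Kx erefl).
    exists (-(lam0 *: gs) + lam0 *: g'); first by exists g'.
    apply: (lt_le_trans (@key R _ _ _ _ _ _ _ gs _ _ (ltW l0) hx hq)).
    exact: bnd'.
  move=> _ [g' Gg' <-].
  have [_ [x Kx <-] hx] := cl2 _ (ex_intro2 _ _ g' Gg' erefl).
  exists ((d (phi i))^-1 *: (x + - q (phi i))).
    by exists (x + - q (phi i)) => //; exists x.
  apply: (lt_le_trans (@key R _ _ _ _ _ _ _ gs _ _ (ltW l0) hx hq)).
  exact: bnd'.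
apply: (le_lt_trans (close_dH _ _ cl)).
- by exists ((d (phi i))^-1 *: (q (phi i) + - q (phi i))), (q (phi i) + - q (phi i)) => //;
    exists (q (phi i)).
- by have [g' Gg'] := G0; exists (-(lam0 *: gs) + lam0 *: g'), g'.
have h := truncnS_gt (C / e).
have h2 : C / e < i.+1%:R.
  apply: (lt_le_trans h); by rewrite ler_nat ltnS.
rewrite ltr_pdivrMr // in h2.
rewrite ltr_pdivrMr ?ltr0Sn //; lra.
Qed.
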